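(* Let $G$ be a non-abelian finite $p$-group such that $Z(G)$ has rank $r$. Suppose $\rho_1,\dots,\rho_k$ are irreducible ordinary representations of $G$ such that $\bigoplus_{i=1}^k\rho_i$ is a faithful projective representation of $G$. (i) If $Z(G)\not\cong(\mathbb{Z}/2\mathbb{Z})^2$ and $Z(G)\not\cong(\mathbb{Z}/2\mathbb{Z})^4$, then $k>r$. (ii) If $Z(G)\cong(\mathbb{Z}/2\mathbb{Z})^2$ or $(\mathbb{Z}/2\mathbb{Z})^4$, then $k>r-1$.
   Context: Rank means minimal number of generators. An ordinary representation $\rho$ of $G$ is faithful as a projective representation if the only $g\in G$ with $\rho(g)$ a scalar matrix is $g=1$. *)

(* Defs.v *)
From mathcomp Require Import all_boot all_order all_algebra all_fingroup all_solvable all_field all_character.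
From mathcomp Require Import mxrepresentation.
Set Implicit Arguments. Unset Strict Implicit. Unset Printing Implicit Defensive.
Import GRing.Theory Num.Theory.
Local Open Scope group_scope.

(* rank = minimal number of generators: library notion 'm(A) = gen_rank A (abelian.v) *)

Definition elemab2 (n : nat) : {set 'rV['Z_2]_n} := [set: 'rV['Z_2]_n].

(* Main.v *)
Require Import Defs.
From mathcomp Require Import all_boot all_order all_algebra all_fingroup all_solvable all_field all_character.
From mathcomp Require Import mxrepresentation.
Set Implicit Arguments. Unset Strict Implicit. Unset Printing Implicit Defensive.
From mathcomp Require Import ring.
Import GRing.Theory Num.Theory UnityRootTheory.
Local Open Scope group_scope.
Section S.
Variables (gT : finGroupType) (G : {group gT}).
Definition mode n (rG : mx_representation algC G n) x : algC :=
  (\tr (rG x) / n%:R)%R.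
Lemma irr_deg_gt0 n (rG : mx_representation algC G n) :
  mx_irreducible rG -> (0 < n)%N.
Proof. by case/mx_irrP. Qed.
Lemma mode_sc n (rG : mx_representation algC G n) x a :
  (0 < n)%N -> rG x = (a%:M)%R -> mode rG x = a.
Proof.
move=> n0 e; rewrite /mode e mxtrace_scalar -[(a *+ n)%R]mulr_natr mulfK //.
by rewrite pnatr_eq0 -lt0n.
Qed.
Lemma irr_center_sc n (rG : mx_representation algC G n) x :
  mx_irreducible rG -> x \in 'Z(G) -> rG x = (mode rG x)%:M%R.
Proof.
move=> irrG /setIP[Gx cGx].
have n0 := irr_deg_gt0 irrG.
have abs := group_closure_closed_field irrG.
have [a e]: exists a, rG x = a%:M%R.
  apply/is_scalar_mxP; apply: (mx_abs_irr_cent_scalar abs).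
  by apply/centgmxP=> y Gy; rewrite -!repr_mxM // (centP cGx).
by rewrite {1}e (mode_sc n0 e).
Qed.
Lemma mode1 n (rG : mx_representation algC G n) :
  (0 < n)%N -> mode rG 1 = 1%R.
Proof. by move=> n0; apply: mode_sc; rewrite // repr_mx1. Qed.
Lemma modeM n (rG : mx_representation algC G n) x y :
  mx_irreducible rG -> x \in 'Z(G) -> y \in 'Z(G) ->
  mode rG (x * y) = (mode rG x * mode rG y)%R.
Proof.
move=> irrG Zx Zy; apply: mode_sc; first exact: irr_deg_gt0 irrG.
have Gx := subsetP (center_sub G) x Zx; have Gy := subsetP (center_sub G) y Zy.
by rewrite repr_mxM // (irr_center_sc irrG Zx) (irr_center_sc irrG Zy) -scalar_mxM.
Qed.
Lemma modeV n (rG : mx_representation algC G n) x :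
  mx_irreducible rG -> x \in 'Z(G) ->
  (mode rG x != 0)%R /\ mode rG x^-1 = ((mode rG x)^-1)%R.
Proof.
move=> irrG Zx; have ZV : x^-1 \in 'Z(G) by rewrite groupV.
have h : (mode rG x * mode rG x^-1 = 1)%R.
  by rewrite -modeM // mulgV mode1 // (irr_deg_gt0 irrG).
have nz : (mode rG x != 0)%R.
  by apply/eqP=> e; move: h; rewrite e mul0r => /eqP; rewrite eq_sym oner_eq0.
by split=> //; rewrite -[mode rG x^-1](mulKf nz) h mulr1.
Qed.
Lemma modeX n (rG : mx_representation algC G n) x m :
  mx_irreducible rG -> x \in 'Z(G) -> mode rG (x ^+ m) = ((mode rG x) ^+ m)%R.
Proof.
move=> irrG Zx; elim: m => [|m IH]; first by rewrite expg0 expr0 mode1 // (irr_deg_gt0 irrG).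
by rewrite expgS exprS modeM ?groupX // IH.
Qed.
End S.

Unset Implicit Arguments.
Lemma idx_spec (p : nat) (w : algC) (b : algC) :
  p.+1.-primitive_root w -> (b ^+ p.+1 = 1)%R ->
  (w ^+ (odflt ord0 [pick j : 'I_p.+1 | (b == w ^+ j)%R]) = b)%R.
Proof.
move=> pw bp; have [i ->] := prim_rootP pw bp.
case: pickP => [j /eqP -> //|/(_ i)]; by rewrite eqxx.
Qed.

Theorem lemma6p1 (gT : finGroupType) (G : {group gT}) (p : nat) (r k : nat)
  (deg : 'I_k -> nat)
  (rho : forall i : 'I_k, mx_representation algC G (deg i)) :
  prime p -> p.-group G -> ~~ abelian G ->
  'm('Z(G)) = r ->
  (forall i, mx_irreducible (rho i)) ->
  (forall g, g \in G ->
     (exists c : algC, forall i : 'I_k, rho i g = (c%:M)%R) -> g = 1%g) ->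
  ((~ ('Z(G) \isog elemab2 2) /\ ~ ('Z(G) \isog elemab2 4)) -> (r < k)%N) /\
  (('Z(G) \isog elemab2 2 \/ 'Z(G) \isog elemab2 4) -> (r - 1 < k)%N).
Proof.
suff main: (prime p -> p.-group G -> ~~ abelian G ->
  'm('Z(G)) = r ->
  (forall i, mx_irreducible (rho i)) ->
  (forall g, g \in G ->
     (exists c : algC, forall i : 'I_k, rho i g = (c%:M)%R) -> g = 1%g) ->
  (r < k)%N).
  move=> pp pG nab hr irr faith; have lt := main pp pG nab hr irr faith.
  by split=> _ //; apply: leq_ltn_trans lt; apply: leq_subr.
move: deg rho; case: k => [|k'] deg rho pp pG nab hr irr faith.
  case/negP: nab; apply: (abelianS _ (abelian1 gT)).
  apply/subsetP=> g Gg; rewrite inE; apply/eqP/faith => //.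
  by exists 0%R => -[].
move: pp pG hr; case: p => [//|p'] pp pG hr.
set p := p'.+1.
pose Z := 'Z(G).
have pZ : p.-group Z := pgroupS (center_sub G) pG.
have cZ : abelian Z := center_abelian G.
pose E := 'Ohm_1(Z).
have abE : p.-abelem E := Ohm1_abelem pZ cZ.
have EZ : E \subset Z := Ohm_sub 1 Z.
have hrE : r = logn p #|E|.
  by rewrite -hr grank_abelian // (rank_abelian_pgroup pZ cZ).
have [_ Ep] := abelemP pp abE.
pose a i x := mode (rho i) x.
have ZE x : x \in E -> x \in Z := subsetP EZ x.
have ap i x : x \in E -> (a i x ^+ p = 1)%R.
  move=> Ex; rewrite /a -modeX ?ZE // Ep // mode1 //.
  exact: irr_deg_gt0 (irr i).
pose b j x := (a (lift ord0 j) x / a ord0 x)%R.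
have bp j x : x \in E -> (b j x ^+ p = 1)%R.
  by move=> Ex; rewrite /b exprMn exprVn !ap // invr1 mulr1.
have [w pw] := C_prim_root_exists (ltn0Sn p').
pose idx (c : algC) := odflt ord0 [pick j : 'I_p | (c == w ^+ j)%R].
pose Phi x := [ffun j => idx (b j x)].
have injPhi : {in E &, injective Phi}.
  move=> x y Ex Ey /ffunP eqF.
  have eb j : b j x = b j y.
    rewrite -(idx_spec _ _ _ pw (bp j x Ex)) -(idx_spec _ _ _ pw (bp j y Ey)).
    by have := eqF j; rewrite !ffunE /idx => ->.
  have Zx := ZE x Ex; have Zy := ZE y Ey.
  have Gxy : x * y^-1 \in G.
    by rewrite groupM ?groupV // (subsetP (center_sub G)).
  have Zxy : x * y^-1 \in Z by rewrite groupM ?groupV.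
  have h := faith _ Gxy.
  suff e1 : x * y^-1 = 1 by rewrite -(mulgKV y x) e1 mul1g.
  apply: h; exists (a ord0 x / a ord0 y)%R => i.
  rewrite (irr_center_sc (irr i) Zxy); congr (_%:M)%R.
  rewrite modeM ?groupV //; have [nzy' ->] := modeV (irr i) Zy.
  case: (unliftP ord0 i) => [j ->|->] //.
  have [nx0 _] := modeV (irr ord0) Zx; have [ny0 _] := modeV (irr ord0) Zy.
  have [nxj _] := modeV (irr (lift ord0 j)) Zx.
  have [nyj _] := modeV (irr (lift ord0 j)) Zy.
  move: (eb j); rewrite /b /a => ebj.
  apply/eqP; rewrite -subr_eq0; apply/eqP.
  move/eqP: ebj; rewrite -subr_eq0 => /eqP ebj.
  set u := mode _ x in ebj nxj *; set v := mode _ y in ebj nyj *.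
  set u0 := mode _ x in ebj nx0 *; set v0 := mode _ y in ebj ny0 *.
  have -> : (u * v^-1 - u0 / v0 = (u / u0 - v / v0) * (u0 / v))%R.
    by field; rewrite ?nyj ?nx0 ?ny0 ?nxj.
  by rewrite ebj mul0r.
have cardE : (#|E| <= p ^ k')%N.
  rewrite -(card_in_imset injPhi).
  by apply: leq_trans (max_card _) _; rewrite card_ffun !card_ord.
rewrite hrE ltnS -(leq_exp2l _ _ (prime_gt1 pp)).
by rewrite -(card_pgroup (abelem_pgroup abE)).
Qed.
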